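(* Let $A\in\mathbb{R}^{n\times n}$ be a lower Hessenberg invertible M-matrix. Define the Gauss--Seidel splitting $M_{GS}=\operatorname{tril}(A)$, $N_{GS}=M_{GS}-A$, $P_{GS}=M_{GS}^{-1}N_{GS}$; the anti-Gauss--Seidel splitting $M_{AGS}=\operatorname{triu}(A)$, $N_{AGS}=M_{AGS}-A$, $P_{AGS}=M_{AGS}^{-1}N_{AGS}$; and, for $S$ the stair matrix of first order or of second order generated by $A$, the staircase splitting $M_S=S$, $N_S=M_S-A$, $P_S=M_S^{-1}N_S$. Then \[ \rho(P_{GS}) \geq \rho(P_S) \geq \rho(P_{AGS}). \]
   Context: $A$ is lower Hessenberg if $A_{ij}=0$ whenever $j>i+1$. $\operatorname{tril}(A)$ (resp. $\operatorname{triu}(A)$) is the lower (resp. upper) triangular part of $A$ including the diagonal. Let $\operatorname{tridiag}(A)$ be the tridiagonal matrix keeping the subdiagonal, diagonal and superdiagonal entries of $A$ and zeroing the rest. The stair matrix of first order generated by $A$ is obtained from $\operatorname{tridiag}(A)$ by setting the entries $(i,i-1)$ and $(i,i+1)$ (when they exist) to zero for every odd $i$; the stair matrix of second order is obtained from $\operatorname{tridiag}(A)$ by setting the entries $(i,i-1)$ and $(i,i+1)$ (when they exist) to zero for every even $i$. $\rho(\cdot)$ denotes the spectral radius. *)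

(* Defs.v *)
From HB Require Import structures.
From mathcomp Require Import all_boot all_order all_algebra.
From mathcomp Require Import boolp classical_sets reals complex.
Set Implicit Arguments. Unset Strict Implicit. Unset Printing Implicit Defensive.
Import Order.TTheory GRing.Theory Num.Theory.
Local Open Scope ring_scope.
Local Open Scope classical_set_scope.

Section Defs.
Variable R : realType.
Variable n : nat.
Implicit Types A B : 'M[R]_n.

Definition spectrum A : set R[i] :=
  [set z | eigenvalue (map_mx (real_complex R) A) z].

Definition spectral_radius A : R :=
  sup [set Normc.normc z | z in spectrum A].

Definition nonneg_mx B : Prop := forall i j, 0 <= B i j.

Definition invertible_Mmatrix A : Prop :=
  exists (s : R) (B : 'M[R]_n),
    nonneg_mx B /\ spectral_radius B < s /\ A = s%:M - B.

Definition lower_hessenberg A : Prop :=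
  forall i j : 'I_n, (i.+1 < j)%N -> A i j = 0.

Definition tril A : 'M[R]_n := \matrix_(i, j) (if (j <= i)%N then A i j else 0).
Definition triu A : 'M[R]_n := \matrix_(i, j) (if (i <= j)%N then A i j else 0).

Definition tridiag_pos (i j : nat) : bool := [|| i == j, i == j.+1 | j == i.+1].

(* The paper indexes rows from 1; row (0-based) i is the
   paper's row i+1.  First order: off-diagonal entries zeroed in rows with
   odd 1-based index, i.e. kept only in rows with odd 0-based index.
   Second order: off-diagonal entries zeroed in rows with even 1-based index,
   i.e. kept only in rows with even 0-based index. *)
Definition stair1 A : 'M[R]_n :=
  \matrix_(i, j) (if (i == j :> nat) || (tridiag_pos i j && odd i) then A i j else 0).
Definition stair2 A : 'M[R]_n :=
  \matrix_(i, j) (if (i == j :> nat) || (tridiag_pos i j && ~~ odd i) then A i j else 0).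

Definition iter_mx (M A : 'M[R]_n) : 'M[R]_n := invmx M *m (M - A).

End Defs.

(* Main.v *)
Require Import Defs.
From HB Require Import structures.
From mathcomp Require Import all_boot all_order all_algebra.
From mathcomp Require Import boolp classical_sets reals complex.
From mathcomp Require Import polyrcf ring lra zify.
Import Order.TTheory GRing.Theory Num.Theory.
Set Implicit Arguments. Unset Strict Implicit. Unset Printing Implicit Defensive.

Section Part1.
Local Open Scope ring_scope.
Local Open Scope complex_scope.

Section Aux.
Variable R : realType.

Lemma normc_ge0 (x : R[i]) : 0 <= Normc.normc x.
Proof. by case: x => a b; rewrite /Normc.normc sqrtr_ge0. Qed.

Lemma normc_real (r : R) : Normc.normc (r%:C) = `|r|.
Proof. by rewrite /Normc.normc /= expr0n /= addr0 sqrtr_sqr. Qed.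

Lemma normc_sum (I : Type) (s : seq I) (P : pred I) (F : I -> R[i]) :
  Normc.normc (\sum_(i <- s | P i) F i) <= \sum_(i <- s | P i) Normc.normc (F i).
Proof.
elim/big_rec2: _ => [|i a b _ Hab]; first by rewrite Normc.normc0.
apply: le_trans (le_normcD _ _) _; exact: lerD.
Qed.

Lemma normcM' (x y : R[i]) : Normc.normc (x * y) = Normc.normc x * Normc.normc y.
Proof. exact: Normc.normcM. Qed.

Lemma argmax_fin (I : finType) (i0 : I) (F : I -> R) : exists j, forall i, F i <= F j.
Proof.
case: (@arg_maxP _ R I i0 predT F isT) => j _ H; exists j => i; exact: H.
Qed.

Lemma argmin_fin (I : finType) (i0 : I) (F : I -> R) : exists j, forall i, F j <= F i.
Proof.
case: (argmax_fin i0 (fun i => - F i)) => j H; exists j => i.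
by rewrite -lerN2 H.
Qed.

End Aux.

End Part1.

Section Part2.
Local Open Scope ring_scope.
Local Open Scope complex_scope.



Lemma rv_neq0 (F : nzRingType) n (u : 'rV[F]_n) : u != 0 -> exists i, u 0 i != 0.
Proof.
move=> H; case: (boolP [exists i, u 0 i != 0]) => [/existsP [i Hi]|H1]; first by exists i.
exfalso; move/negP: H; apply; apply/eqP/matrixP => a b; rewrite ord1 mxE.
by apply/eqP; move/existsPn: H1 => /(_ b); rewrite negbK.
Qed.

Lemma core_bound (R : realType) n (M N : 'M[R]_n) (y : 'rV[R]_n) (c : R)
  (u : 'rV[R[i]]_n) (z : R[i]) :
  0 < c -> (forall i, 0 < y 0 i) -> (forall i j, 0 <= N i j) ->
  (forall i j, i != j -> M i j <= 0) ->
  (forall j, 0 < (y *m (c *: M - N)) 0 j) ->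
  u *m map_mx (real_complex R) N = z *: (u *m map_mx (real_complex R) M) -> u != 0 ->
  Normc.normc z <= c.
Proof.
move=> c0 ypos Nge0 Mle0 Zpos Heq u0.
set nu := fun i => Normc.normc (u 0 i).
set r := Normc.normc z.
rewrite leNgt; apply/negP => rc.
have [i0 ui0] := rv_neq0 u0.
have nui0 : 0 < nu i0.
  rewrite lt_neqAle normc_ge0 andbT eq_sym; apply/negP => /eqP/Normc.eq0_normc.
  by apply/eqP.
have [j Hj] := argmax_fin i0 (fun i => nu i / y 0 i).
set m := nu j / y 0 j.
have m0 : 0 < m by apply: lt_le_trans (Hj i0); rewrite divr_gt0.
have nule : forall i, nu i <= m * y 0 i.
  by move=> i; rewrite -ler_pdivrMr //; exact: Hj.
have nuj : nu j = m * y 0 j by rewrite /m divfK // gt_eqF.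
move/matrixP: Heq => /(_ 0 j); rewrite !mxE => E0.
have EN : \sum_j0 u 0 j0 * (map_mx (real_complex R) N) j0 j = \sum_i u 0 i * (N i j)%:C.
  by apply: eq_bigr => i _; rewrite mxE.
have EM : \sum_j0 u 0 j0 * (map_mx (real_complex R) M) j0 j = \sum_i u 0 i * (M i j)%:C.
  by apply: eq_bigr => i _; rewrite mxE.
have E : \sum_i u 0 i * (N i j)%:C = z * (u 0 j * (M j j)%:C + \sum_(i | i != j) u 0 i * (M i j)%:C).
  by rewrite -EN E0 EM (bigD1 j).

pose SN := \sum_i y 0 i * N i j.
pose SM := \sum_(i | i != j) y 0 i * (- M i j).
have SN0 : 0 <= SN by apply: sumr_ge0 => i _; apply: mulr_ge0; [exact: ltW|].
have SM0 : 0 <= SM.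
  by apply: sumr_ge0 => i Hi; apply: mulr_ge0; [exact: ltW|rewrite oppr_ge0; exact: Mle0].
have Zj := Zpos j; rewrite !mxE in Zj.
have S1 : \sum_j0 y 0 j0 * (c *: M - N) j0 j = c * \sum_i y 0 i * M i j - SN.
  rewrite /SN mulr_sumr -sumrB; apply: eq_bigr => i _; rewrite !mxE; ring.
have S2 : \sum_i y 0 i * M i j = y 0 j * M j j - SM.
  rewrite (bigD1 j) //= /SM -sumrN; congr (_ + _); apply: eq_bigr => i _; ring.
have EZ : \sum_j0 y 0 j0 * (c *: M - N) j0 j = c * (y 0 j * M j j) - c * SM - SN.
  rewrite S1 S2; ring.
rewrite EZ in Zj.
have Mjj0 : 0 < M j j.
  have cSM : 0 <= c * SM by rewrite mulr_ge0 // ltW.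
  have : 0 < c * (y 0 j * M j j) by lra.
  by rewrite pmulr_rgt0 // pmulr_rgt0.
have K1 : r * (nu j * M j j) <= \sum_i nu i * N i j + r * \sum_(i | i != j) nu i * (- M i j).
  have E2 : z * (u 0 j * (M j j)%:C) =
      \sum_i u 0 i * (N i j)%:C - z * \sum_(i | i != j) u 0 i * (M i j)%:C.
    by rewrite E mulrDr addrK.
  have := congr1 (@Normc.normc R) E2.
  rewrite normcM' normcM' normc_real (gtr0_norm Mjj0) -/r => ->.
  apply: le_trans (le_normcD _ _) _.
  rewrite normcN normcM' -/r; apply: lerD.
    apply: le_trans (normc_sum _ _ _) _; apply: ler_sum => i _.
    by rewrite normcM' normc_real ger0_norm.
  apply: ler_wpM2l; first exact: normc_ge0.
  apply: le_trans (normc_sum _ _ _) _; apply: ler_sum => i Hi.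
  by rewrite normcM' normc_real ler0_norm ?Mle0.
have K2 : \sum_i nu i * N i j <= m * SN.
  rewrite /SN mulr_sumr; apply: ler_sum => i _; rewrite mulrA.
  by apply: ler_wpM2r; [exact: Nge0| exact: nule].
have K3 : \sum_(i | i != j) nu i * (- M i j) <= m * SM.
  rewrite /SM mulr_sumr; apply: ler_sum => i Hi; rewrite mulrA.
  by apply: ler_wpM2r; [rewrite oppr_ge0; exact: Mle0| exact: nule].
have r0 : 0 < r by lra.
have K4 : r * (m * (y 0 j * M j j)) <= m * SN + r * (m * SM).
  rewrite [m * _]mulrA -nuj.
  apply: le_trans K1 _; apply: lerD => //; by rewrite ler_wpM2l // ltW.
have K5 : r * (y 0 j * M j j) <= SN + r * SM.
  rewrite -(ler_pM2l m0) mulrDr.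
  have -> : m * (r * (y 0 j * M j j)) = r * (m * (y 0 j * M j j)) by ring.
  by have -> : m * (r * SM) = r * (m * SM) by ring.
set Y := y 0 j * M j j.
have Y0 : 0 < Y by rewrite /Y mulr_gt0.
have A1 : 0 < r * (c * Y - c * SM - SN) by rewrite mulr_gt0.
have A2 : c * (r * Y) <= c * (SN + r * SM) by rewrite ler_wpM2l // ltW.
have A3 : 0 <= (r - c) * SN by rewrite mulr_ge0 // subr_ge0 ltW.
nra.
Qed.

End Part2.

Section Part3.
Local Open Scope ring_scope.

Section Zmat.
Variable R : realType.
Variable n : nat.

Definition zmat (Z : 'M[R]_n) := forall i j, i != j -> Z i j <= 0.
Definition posv (v : 'rV[R]_n) := forall j, 0 < v 0 j.

Lemma mono (Z : 'M[R]_n) (y v : 'rV[R]_n) : zmat Z -> posv y -> posv (y *m Z) ->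
  (forall j, 0 <= (v *m Z) 0 j) -> forall i, 0 <= v 0 i.
Proof.
move=> zZ yp yZp vZ i0.
have [j Hj] := argmin_fin i0 (fun i => v 0 i / y 0 i).
set m := v 0 j / y 0 j.
have vge : forall i, m * y 0 i <= v 0 i by move=> i; rewrite -ler_pdivlMr //; exact: Hj.
have vj : v 0 j = m * y 0 j by rewrite /m divfK // gt_eqF.
suff m0 : 0 <= m.
  by apply: le_trans (vge i0); rewrite mulr_ge0 // ltW.
rewrite leNgt; apply/negP => m0.
have := vZ j; rewrite mxE => H.
have : \sum_i v 0 i * Z i j <= m * (y *m Z) 0 j.
  rewrite mxE mulr_sumr; apply: ler_sum => i _.
  case: (eqVneq i j) => [->|ij]; first by rewrite vj mulrA.
  by rewrite mulrA ler_wnM2r // zZ.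
have := yZp j; move: (y *m Z) => w wj.
have : m * w 0 j < 0 by rewrite nmulr_rlt0.
lra.
Qed.

Lemma posZ (Z : 'M[R]_n) (v : 'rV[R]_n) : zmat Z -> (forall i, 0 <= v 0 i) ->
  posv (v *m Z) -> posv v.
Proof.
move=> zZ v0 vZ j; rewrite lt_neqAle v0 andbT; apply/negP => /eqP vj.
have := vZ j; rewrite mxE (bigD1 j) //= -vj mul0r add0r.
apply/negP; rewrite -leNgt; apply: sumr_le0 => i ij.
by rewrite mulr_ge0_le0 // zZ.
Qed.

Lemma zmat_unit (Z : 'M[R]_n) (y : 'rV[R]_n) : zmat Z -> posv y -> posv (y *m Z) ->
  Z \in unitmx.
Proof.
move=> zZ yp yZp; rewrite unitmxE unitfE; apply/negP => /det0P [u u0 uZ].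
have h1 := @mono Z y u zZ yp yZp.
have h2 := @mono Z y (- u) zZ yp yZp.
move/negP: u0; apply; apply/eqP/matrixP => a b; rewrite ord1 mxE.
apply/eqP; rewrite eq_le h1 ?andbT; last by move=> j; rewrite uZ mxE.
have h2' : forall i, 0 <= (- u) 0 i by apply: h2 => j; rewrite mulNmx uZ oppr0 mxE.
by have := h2' b; rewrite mxE oppr_ge0.
Qed.

End Zmat.

End Part3.

Section Part4.
Local Open Scope ring_scope.

Lemma seq_max (R : realType) (s : seq R) x : x \in s -> exists2 t, t \in s & forall y, y \in s -> y <= t.
Proof.
elim: s x => [//|h s IH] x; rewrite inE => /orP [/eqP _|xs].
  case: (boolP (has (fun y => h < y) s)) => [/hasP [y ys hy]|].
    have [t ts Ht] := IH _ ys; exists t; first by rewrite inE ts orbT.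
    move=> y'; rewrite inE => /orP [/eqP ->|]; last exact: Ht.
    by apply: le_trans (Ht _ ys); exact: ltW.
  move/hasPn => Hs; exists h; first by rewrite inE eqxx.
  by move=> y; rewrite inE => /orP [/eqP ->//|/Hs]; rewrite -leNgt.
have [t ts Ht] := IH _ xs.
case: (lerP h t) => ht.
  exists t; first by rewrite inE ts orbT.
  by move=> y; rewrite inE => /orP [/eqP ->//|/Ht].
exists h; first by rewrite inE eqxx.
by move=> y; rewrite inE => /orP [/eqP ->//|/Ht yt]; apply: le_trans yt (ltW ht).
Qed.

Section Cont.
Variable R : realType.
Variable n : nat.

Lemma cont (M N : 'M[R]_n) (a b : R) : 0 <= a -> a <= b ->
  (forall i j, i != j -> M i j <= 0) -> (forall i j, 0 <= N i j) ->
  (forall t, a <= t -> t <= b -> \det (t *: M - N) != 0) ->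
  (exists y, posv y /\ posv (y *m (b *: M - N))) ->
  exists y, posv y /\ posv (y *m (a *: M - N)).
Proof.
move=> a0 ab Mle0 Nge0 det0 [y0 [y0p y0Z]].
pose Z t := t *: M - N.
have zZ : forall t, 0 <= t -> zmat (Z t).
  move=> t t0 i j ij; rewrite !mxE; have h1 := Nge0 i j.
  have h2 : t * M i j <= 0 by rewrite mulr_ge0_le0 // Mle0.
  lra.
pose Zp : 'M[{poly R}]_n := 'X *: map_mx polyC M - map_mx polyC N.
have Hev : forall t, map_mx (horner_eval t) Zp = Z t.
  by move=> t; apply/matrixP => i j; rewrite !mxE /horner_eval !hornerE.
pose p := \det Zp.
have Hp : forall t, p.[t] = \det (Z t).
  by move=> t; rewrite -Hev det_map_mx.
pose q (j : 'I_n) := (const_mx 1 *m \adj Zp : 'rV[{poly R}]_n) 0 j.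
pose w t := const_mx 1 *m invmx (Z t) : 'rV[R]_n.
have Hq : forall (t : R) (j : 'I_n), (q j).[t] = (const_mx 1 *m \adj (Z t) : 'rV[R]_n) 0 j.
  move=> t j.
  have -> : (q j).[t] = (map_mx (horner_eval t) (const_mx 1 *m \adj Zp) : 'rV[R]_n) 0 j by rewrite mxE.
  by rewrite map_mxM map_const_mx rmorph1 map_mx_adj Hev.
have Zunit : forall t, a <= t -> t <= b -> Z t \in unitmx.
  by move=> t h1 h2; rewrite unitmxE unitfE det0.
have wZ : forall t, a <= t -> t <= b -> w t *m Z t = const_mx 1.
  by move=> t h1 h2; rewrite /w -mulmxA mulVmx ?Zunit // mulmx1.
have p0 : forall t, a <= t -> t <= b -> p.[t] != 0.
  by move=> t h1 h2; rewrite Hp det0.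
have Hw : forall t j, a <= t -> t <= b -> (w t) 0 j = (q j).[t] / p.[t].
  move=> t j h1 h2; rewrite /w /invmx Zunit // -scalemxAr mxE Hq Hp mulrC //.
pose f j := q j * p.
have Hf : forall t j, a <= t -> t <= b -> (f j).[t] = (w t) 0 j * (p.[t])^+2.
  move=> t j h1 h2; rewrite hornerM Hw //; have := p0 t h1 h2 => pn.
  by field.
have sq0 : forall t, a <= t -> t <= b -> 0 < (p.[t])^+2.
  by move=> t h1 h2; rewrite lt_def sqr_ge0 andbT expf_neq0 // p0.
have fpos : forall t j, a <= t -> t <= b -> (0 < (f j).[t]) = (0 < (w t) 0 j).
  by move=> t j h1 h2; rewrite Hf // pmulr_lgt0 // sq0.
have fge : forall t j, a <= t -> t <= b -> (0 <= (f j).[t]) = (0 <= (w t) 0 j).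
  by move=> t j h1 h2; rewrite Hf // pmulr_lge0 // sq0.
have wpos : forall t, a <= t -> t <= b -> (forall i, 0 <= (w t) 0 i) -> posv (w t).
  move=> t h1 h2 H; apply: (posZ (zZ t (le_trans a0 h1))) => // j.
  by rewrite wZ // mxE ltr01.
have lebb : b <= b by [].
have fb : forall j, 0 < (f j).[b].
  move=> j; rewrite fpos //; apply: (wpos b ab lebb) => i.
  apply: (mono (zZ b (le_trans a0 ab)) y0p y0Z) => k.
  by rewrite wZ // mxE ler01.
have leaa : a <= a by [].
suff fa : forall j, 0 < (f j).[a].
  exists (w a); split.
    by move=> j; rewrite -fpos.
  by move=> j; rewrite wZ // mxE ltr01.
pose Q := \prod_j f j.
have HQ : forall t, Q.[t] = \prod_j (f j).[t] by move=> t; rewrite horner_prod.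
have Q0 : Q != 0.
  apply/eqP => Q0; have := HQ b; rewrite Q0 horner0 => /esym/eqP.
  by apply/negP; rewrite gt_eqF // prodr_gt0.
have rootQ : forall t j, root (f j) t -> root Q t.
  by move=> t j; rewrite /root HQ => /eqP fj0; apply/prodf_eq0; exists j => //; rewrite fj0.
pose s := [seq x <- rootsR Q | (a <= x) && (x <= b)].
have ins : forall x, root Q x -> a <= x -> x <= b -> x \in s.
  move=> x rx h1 h2; rewrite mem_filter h1 h2 /=.
  by rewrite -(roots_on_rootsR Q0) rx andbT.
have sin : forall x, x \in s -> [/\ root Q x, a <= x & x <= b].
  move=> x; rewrite mem_filter => /andP [/andP [h1 h2]]; rewrite -(roots_on_rootsR Q0).
  by case/andP => _ rx.
apply/forallP/negPn/negP; case/forallPn => j0; rewrite -leNgt => fa0.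
have hh : (f j0).[a] * (f j0).[b] <= 0 by rewrite mulr_le0_ge0 //; exact: ltW (fb j0).
case: (polyrcf.poly_ivt ab hh) => x0 x0in rx0.
move: x0in; rewrite in_itv /= => /andP [x01 x02].
have [t2 t2s Ht2] := seq_max (ins _ (rootQ _ _ rx0) x01 x02).
have [rt2 t21 t22] := sin _ t2s.
have fge2 : forall i, 0 <= (f i).[t2].
  move=> i; rewrite leNgt; apply/negP => fi.
  have hh2 : (f i).[t2] * (f i).[b] <= 0 by rewrite mulr_le0_ge0 //; [exact: ltW| exact: ltW (fb i)].
  case: (polyrcf.poly_ivt t22 hh2) => x1 x1in rx1.
  move: x1in; rewrite in_itv /= => /andP [x11 x12].
  have x1s := ins _ (rootQ _ _ rx1) (le_trans t21 x11) x12.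
  have x1e : x1 = t2 by apply/eqP; rewrite eq_le x11 Ht2.
  by move: rx1; rewrite x1e /root => /eqP fi0; move: fi; rewrite fi0 ltxx.
have wge2 : forall i, 0 <= (w t2) 0 i by move=> i; rewrite -fge.
have wp2 := wpos t2 t21 t22 wge2.
have : 0 < Q.[t2] by rewrite HQ prodr_gt0 // => i _; rewrite fpos.
by move: rt2; rewrite /root => /eqP ->; rewrite ltxx.
Qed.
End Cont.

End Part4.

Section Part5.
Local Open Scope ring_scope.
Local Open Scope classical_set_scope.
Local Open Scope complex_scope.

Section SR.
Variable R : realType.
Variable n : nat.
Local Notation rc := (real_complex R).

Lemma eig_bound (G : 'M[R]_n) z : spectrum G z ->
  Normc.normc z <= \sum_i \sum_k `|G i k|.
Proof.
rewrite /spectrum /= => /eigenvalueP [v Hv v0].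
set nu := fun i => Normc.normc (v 0 i).
have [i0 ui0] := rv_neq0 v0.
have nui0 : 0 < nu i0.
  rewrite lt_neqAle normc_ge0 andbT eq_sym; apply/negP => /eqP/Normc.eq0_normc.
  by apply/eqP.
have [j Hj] := argmax_fin i0 nu.
have nuj : 0 < nu j by apply: lt_le_trans (Hj i0).
move/matrixP: Hv => /(_ 0 j); rewrite !mxE => E0.
have E : \sum_i v 0 i * (G i j)%:C = z * v 0 j.
  by rewrite -E0; apply: eq_bigr => i _; rewrite mxE.
have K : Normc.normc z * nu j <= nu j * \sum_i `|G i j|.
  rewrite -normcM' -E mulr_sumr; apply: le_trans (normc_sum _ _ _) _.
  apply: ler_sum => i _; rewrite normcM' normc_real.
  by apply: ler_wpM2r => //; exact: Hj.
have K2 : \sum_i `|G i j| <= \sum_i \sum_k `|G i k|.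
  apply: ler_sum => i _; rewrite (bigD1 j) //= lerDl; exact: sumr_ge0.
rewrite -(ler_pM2r nuj); apply: le_trans K _; by rewrite mulrC ler_wpM2r // ltW.
Qed.

Definition specE (G : 'M[R]_n) := [set Normc.normc z | z in spectrum G].

Lemma specE_ub (G : 'M[R]_n) : has_ubound (specE G).
Proof.
exists (\sum_i \sum_k `|G i k|); apply/ubP => x [z zs hx]; subst x; exact: eig_bound.
Qed.

Lemma sr_ub (G : 'M[R]_n) z : spectrum G z -> Normc.normc z <= spectral_radius G.
Proof.
move=> zs; have := @ub_le_sup R (specE G) (specE_ub G); move/ubP; apply.
by exists z.
Qed.

Lemma sr_ge0 (G : 'M[R]_n) : 0 <= spectral_radius G.
Proof.
case: (pselect (specE G !=set0)) => [[x [z zs hx]]|H].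
  by apply: le_trans (sr_ub zs); exact: normc_ge0.
have E : specE G = set0.
  by apply/seteqP; split => x // Hx; exfalso; apply: H; exists x.
by rewrite /spectral_radius -/(specE G) E sup0.
Qed.

Lemma sr_le (G : 'M[R]_n) c : 0 <= c -> (forall z, spectrum G z -> Normc.normc z <= c) ->
  spectral_radius G <= c.
Proof.
move=> c0 H.
case: (pselect (specE G !=set0)) => [ne|H0].
  rewrite /spectral_radius -/(specE G); apply: ge_sup => //.
  by move=> x [z zs hx]; subst x; exact: H.
have E : specE G = set0.
  by apply/seteqP; split => x // Hx; exfalso; apply: H0; exists x.
by rewrite /spectral_radius -/(specE G) E sup0.
Qed.

Lemma real_eig (G : 'M[R]_n) (u : 'rV[R]_n) t : u != 0 -> u *m G = t *: u ->
  `|t| <= spectral_radius G.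
Proof.
move=> u0 Hu; rewrite -normc_real; apply: sr_ub.
rewrite /spectrum /=; apply/eigenvalueP; exists (map_mx rc u).
  by rewrite -map_mxM Hu map_mxZ.
by rewrite map_mx_eq0.
Qed.

Lemma gen_eig_real (M A : 'M[R]_n) (u : 'rV[R]_n) t : M \in unitmx -> u != 0 ->
  u *m (M - A) = t *: (u *m M) -> `|t| <= spectral_radius (iter_mx M A).
Proof.
move=> Mu u0 Hu; apply: (@real_eig _ (u *m M)).
  apply/negP => /eqP uM; move/negP: u0; apply; apply/eqP.
  by rewrite -[u]mulmx1 -(mulmxV Mu) mulmxA uM mul0mx.
by rewrite /iter_mx mulmxA -(mulmxA u) mulmxV // mulmx1 Hu.
Qed.

Lemma gen_eig_cplx (M A : 'M[R]_n) z : M \in unitmx -> spectrum (iter_mx M A) z ->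
  exists2 u : 'rV[R[i]]_n, u != 0 &
    u *m map_mx rc (M - A) = z *: (u *m map_mx rc M).
Proof.
move=> Mu; rewrite /spectrum /= => /eigenvalueP [v Hv v0].
have Mcu : map_mx rc M \in unitmx by rewrite unitmxE det_map_mx rmorph_unit // -unitmxE.
exists (v *m invmx (map_mx rc M)).
  apply/negP => /eqP vM; move/negP: v0; apply; apply/eqP.
  by rewrite -[v]mulmx1 -(mulVmx Mcu) mulmxA vM mul0mx.
rewrite -[(v *m _) *m map_mx rc M]mulmxA mulVmx // mulmx1 -Hv /iter_mx map_mxM map_invmx mulmxA //.
Qed.

End SR.

End Part5.

Section Part6.
Local Open Scope ring_scope.

Section Split.
Variable R : realType.
Variable n : nat.
Variable A : 'M[R]_n.
Hypothesis zA : zmat A.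
Variable y0 : 'rV[R]_n.
Hypothesis y0p : posv y0.
Hypothesis y0A : posv (y0 *m A).

Definition spl (pat : 'I_n -> 'I_n -> bool) : 'M[R]_n :=
  \matrix_(i, j) (if pat i j then A i j else 0).

Section OnePat.
Variable pat : 'I_n -> 'I_n -> bool.
Hypothesis patd : forall i, pat i i.

Lemma splN_ge0 i j : 0 <= (spl pat - A) i j.
Proof.
rewrite !mxE; case: (eqVneq i j) => [->|ij]; first by rewrite patd subrr.
case: (pat i j); first by rewrite subrr.
by rewrite sub0r oppr_ge0 zA.
Qed.

Lemma spl_zmat : zmat (spl pat).
Proof. by move=> i j ij; rewrite mxE; case: (pat i j) => //; exact: zA. Qed.

Lemma spl_y0 : posv (y0 *m spl pat).
Proof.
move=> j; have -> : spl pat = A + (spl pat - A) by rewrite addrC subrK.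
rewrite mulmxDr mxE; have h1 := y0A j.
have h2 : 0 <= (y0 *m (spl pat - A)) 0 j.
  rewrite mxE; apply: sumr_ge0 => i _; apply: mulr_ge0; [exact: ltW| exact: splN_ge0].
lra.
Qed.

Lemma spl_unit : spl pat \in unitmx.
Proof. exact: zmat_unit spl_zmat y0p spl_y0. Qed.

Lemma Zentry c i j : (c *: spl pat - (spl pat - A)) i j = c ^+ pat i j * A i j.
Proof. by rewrite !mxE; case: (pat i j) => /=; ring. Qed.

End OnePat.

Lemma compare (pat1 pat2 : 'I_n -> 'I_n -> bool) :
  (forall i, pat1 i i) -> (forall i, pat2 i i) ->
  (forall c, 0 < c -> c < 1 -> exists e : 'I_n -> R, (forall i, 0 < e i) /\
     forall i j, e j * (c *: spl pat1 - (spl pat1 - A)) i j <=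
                 e i * (c *: spl pat2 - (spl pat2 - A)) i j) ->
  spectral_radius (iter_mx (spl pat2) A) <= spectral_radius (iter_mx (spl pat1) A).
Proof.
move=> p1d p2d Hsc.
set M1 := spl pat1; set M2 := spl pat2.
set r1 := spectral_radius (iter_mx M1 A).
have r10 : 0 <= r1 by exact: sr_ge0.
apply: sr_le => // z zs.
have [u u0 Hu] := gen_eig_cplx (spl_unit p2d) zs.
rewrite leNgt; apply/negP => rz.
set c := (r1 + Normc.normc z) / 2.
have c1 : r1 < c by rewrite /c; lra.
have c2 : c < Normc.normc z by rewrite /c; lra.
suff [y2 [y2p y2Z]] : exists y2, posv y2 /\ posv (y2 *m (c *: M2 - (M2 - A))).
  have c0 : 0 < c by lra.
  have := core_bound c0 y2p (splN_ge0 p2d) (@spl_zmat pat2) y2Z Hu u0.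
  lra.
case: (lerP 1 c) => hc.
  exists y0; split => // j.
  have -> : c *: M2 - (M2 - A) = (c - 1) *: M2 + A.
    by apply/matrixP => i k; rewrite !mxE; ring.
  rewrite mulmxDr mxE -scalemxAr mxE.
  have h1 := spl_y0 p2d j; have h2 := y0A j.
  have h3 : 0 <= (c - 1) * (y0 *m M2) 0 j by rewrite mulr_ge0 // ?subr_ge0 // ltW.
  lra.
have c0 : 0 < c by lra.
have [y1 [y1p y1Z]] : exists y1, posv y1 /\ posv (y1 *m (c *: M1 - (M1 - A))).
  apply: cont.
  - exact: ltW c0.
  - exact: ltW hc.
  - exact: (@spl_zmat pat1).
  - exact: splN_ge0.
  - move=> t h1 h2; apply/negP => /det0P [v v0 vZ].
    have Hv : v *m (M1 - A) = t *: (v *m M1).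
      apply/eqP; rewrite eq_sym -subr_eq0 scalemxAr -mulmxBr; exact/eqP.
    have := gen_eig_real (spl_unit p1d) v0 Hv.
    rewrite ger0_norm; last by lra.
    rewrite -/M1 -/r1; lra.
  - exists y0; split => //; by rewrite scale1r opprB addrC subrK.
have [e [ep He]] := Hsc c c0 hc.
exists (\row_i (y1 0 i * e i)); split.
  by move=> i; rewrite mxE mulr_gt0.
move=> j; have := y1Z j; rewrite !mxE => H.
have : 0 < e j * \sum_i y1 0 i * (c *: M1 - (M1 - A)) i j by rewrite mulr_gt0.
move/lt_le_trans; apply; rewrite mulr_sumr; apply: ler_sum => i _; rewrite mxE.
rewrite mulrCA -mulrA; apply: ler_wpM2l; [exact: ltW| exact: He].
Qed.
End Split.

End Part6.

Section Part7.
Local Open Scope ring_scope.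

Lemma scale_nat (R : realType) n (A : 'M[R]_n) (pat1 pat2 : 'I_n -> 'I_n -> bool) (f : nat -> nat) :
  lower_hessenberg A -> zmat A -> (forall i, pat1 i i) -> (forall i, pat2 i i) ->
  (forall i j : 'I_n, i != j -> (j <= i.+1)%N -> (f j + pat1 i j <= f i + pat2 i j)%N) ->
  (forall c, 0 < c -> c < 1 -> exists e : 'I_n -> R, (forall i, 0 < e i) /\
     forall i j, e j * (c *: spl A pat1 - (spl A pat1 - A)) i j <=
                 e i * (c *: spl A pat2 - (spl A pat2 - A)) i j).
Proof.
move=> hH zA p1d p2d Hf c c0 c1; exists (fun i => c ^+ f i); split.
  by move=> i; rewrite exprn_gt0.
move=> i j; rewrite !Zentry.
case: (eqVneq i j) => [->|ij]; first by rewrite p1d p2d.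
case: (leqP j i.+1) => hj; last by rewrite hH // !mulr0.
rewrite !mulrA -!exprD; apply: ler_wnM2r; first exact: zA.
apply: ler_wiXn2l; [exact: ltW| exact: ltW| exact: Hf].
Qed.

Lemma H1 (R : realType) n (A : 'M[R]_n) : invertible_Mmatrix A ->
  zmat A /\ exists y0, posv y0 /\ posv (y0 *m A).
Proof.
case=> s [B [Bge0 [rB ->]]].
split.
  by move=> i j ij; rewrite !mxE (negbTE ij) /= subr_le0 Bge0.
have s0 : 0 <= s by apply: le_trans (ltW rB); exact: sr_ge0.
set beta := 1 + \sum_i \sum_k B i k.
have beta1 : 1 <= beta by rewrite /beta lerDl; apply: sumr_ge0 => i _; apply: sumr_ge0.
have [y [yp yZ]] : exists y, posv y /\ posv (y *m (s *: 1%:M - B)).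
  apply: (@cont R n 1%:M B s (s + beta)) => //.
  - lra.
  - by move=> i j ij; rewrite mxE (negbTE ij).
  - move=> t h1 h2; apply/negP => /det0P [v v0 vZ].
    have Hv : v *m B = t *: v.
      apply/eqP; rewrite eq_sym -subr_eq0; move: vZ; rewrite mulmxBr -scalemxAr mulmx1.
      by move=> ->.
    have := real_eig v0 Hv; rewrite ger0_norm; last by lra.
    lra.
  - exists (const_mx 1); split; first by move=> j; rewrite mxE ltr01.
    move=> j; rewrite mulmxBr -scalemxAr mulmx1 !mxE.
    have h : \sum_i (const_mx 1 : 'rV[R]_n) 0 i * B i j <= \sum_i \sum_k B i k.
      apply: ler_sum => i _; rewrite mxE mul1r (bigD1 j) //= lerDl.
      by apply: sumr_ge0.
    rewrite /beta in h beta1 *; lra.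
by exists y; split => //; rewrite scalemx1 in yZ.
Qed.

End Part7.

Local Open Scope ring_scope.

Ltac natcase i j :=
  move: (odd_double_half i) (odd_double_half j)
    (uphalf_half i : uphalf i = (odd i + i./2)%N) (uphalf_half j : uphalf j = (odd j + j./2)%N);
  rewrite /tridiag_pos;
  case: (odd i); case: (odd j); case: eqP; case: eqP; case: eqP; case: leqP; case: leqP => /= *; lia.

Lemma L1 (i j : nat) : i != j -> (j <= i.+1)%N ->
  (j./2 + (j <= i) <= i./2 + ((i == j) || (tridiag_pos i j && odd i)))%N.
Proof. move=> ij hj; move: ij hj; natcase i j. Qed.
Lemma L2 (i j : nat) : i != j -> (j <= i.+1)%N ->
  (uphalf j + (j <= i) <= uphalf i + ((i == j) || (tridiag_pos i j && ~~ odd i)))%N.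
Proof. move=> ij hj; move: ij hj; natcase i j. Qed.
Lemma L3 (i j : nat) : i != j -> (j <= i.+1)%N ->
  (uphalf j + ((i == j) || (tridiag_pos i j && odd i)) <= uphalf i + (i <= j))%N.
Proof. move=> ij hj; move: ij hj; natcase i j. Qed.
Lemma L4 (i j : nat) : i != j -> (j <= i.+1)%N ->
  (j./2 + ((i == j) || (tridiag_pos i j && ~~ odd i)) <= i./2 + (i <= j))%N.
Proof. move=> ij hj; move: ij hj; natcase i j. Qed.

Theorem theorem4 (R : realType) (n : nat) (A : 'M[R]_n) :
  lower_hessenberg A -> invertible_Mmatrix A ->
  (spectral_radius (iter_mx (tril A) A) >= spectral_radius (iter_mx (stair1 A) A) /\
   spectral_radius (iter_mx (stair1 A) A) >= spectral_radius (iter_mx (triu A) A)) /\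
  (spectral_radius (iter_mx (tril A) A) >= spectral_radius (iter_mx (stair2 A) A) /\
   spectral_radius (iter_mx (stair2 A) A) >= spectral_radius (iter_mx (triu A) A)).
Proof.
move=> hH HM; have [zA [y0 [y0p y0A]]] := H1 HM.
have E1 : tril A = spl A (fun i j : 'I_n => (j <= i)%N) by [].
have E2 : triu A = spl A (fun i j : 'I_n => (i <= j)%N) by [].
have E3 : stair1 A = spl A (fun i j : 'I_n => (i == j :> nat) || (tridiag_pos i j && odd i)) by [].
have E4 : stair2 A = spl A (fun i j : 'I_n => (i == j :> nat) || (tridiag_pos i j && ~~ odd i)) by [].
rewrite E1 E2 E3 E4.
split; split; apply: (compare zA y0p y0A); (try by move=> i; rewrite /= ?leqnn ?eqxx).
- apply: (@scale_nat R n A _ _ (fun k => k./2)) => //; (try by move=> i; rewrite /= ?leqnn ?eqxx).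
  by move=> i j ij hj; apply: L1.
- apply: (@scale_nat R n A _ _ uphalf) => //; (try by move=> i; rewrite /= ?leqnn ?eqxx).
  by move=> i j ij hj; apply: L3.
- apply: (@scale_nat R n A _ _ uphalf) => //; (try by move=> i; rewrite /= ?leqnn ?eqxx).
  by move=> i j ij hj; apply: L2.
- apply: (@scale_nat R n A _ _ (fun k => k./2)) => //; (try by move=> i; rewrite /= ?leqnn ?eqxx).
  by move=> i j ij hj; apply: L4.
Qed.
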